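(* Let $g(x)=\sum_{n\ge 1}\frac{2\,(4n+1)!}{(n+1)!\,(3n+2)!}\,x^n$. Then $g$ satisfies, as a formal power series, the algebraic equation $$x(x^2+11x-1)+(4x^3+25x^2-14x+1)\,g(x)+x(6x^2+17x+3)\,g(x)^2+x^2(4x+3)\,g(x)^3+x^3\,g(x)^4=0.$$ Moreover the series converges at $x=\frac{27}{256}$ and $g\!\left(\frac{27}{256}\right)=\frac{5}{27}$. *)

(* Defs.v *)
From HB Require Import structures.
From mathcomp Require Import all_boot all_order all_algebra.
From mathcomp Require Import all_classical all_reals all_analysis.
Set Implicit Arguments. Unset Strict Implicit. Unset Printing Implicit Defensive.
Import Order.TTheory GRing.Theory Num.Theory.
Local Open Scope ring_scope.

Definition gcoef (R : fieldType) (n : nat) : R :=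
  if n is 0 then 0
  else (2 * (4 * n + 1)`!)%:R / ((n + 1)`! * (3 * n + 2)`!)%:R.

Definition fps (R : comRingType) := nat -> R.
Definition fps_add (R : comRingType) (a b : fps R) : fps R := fun n => a n + b n.
Definition fps_mul (R : comRingType) (a b : fps R) : fps R :=
  fun n => \sum_(i < n.+1) a i * b (n - i)%N.
Definition fps_one (R : comRingType) : fps R := fun n => if n is 0 then 1 else 0.
Definition fps_pow (R : comRingType) (a : fps R) (k : nat) : fps R :=
  iter k (fps_mul a) (@fps_one R).
Definition fps_of_poly (R : comRingType) (p : {poly R}) : fps R := fun n => p`_n.

(* Main.v *)
Require Import Defs.
From HB Require Import structures.
From mathcomp Require Import all_boot all_order all_algebra.
From mathcomp Require Import all_classical all_reals all_analysis.
From mathcomp Require Import ring lra zify.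
Import Order.TTheory GRing.Theory Num.Theory.
Import numFieldNormedType.Exports.
Local Open Scope classical_set_scope.
Local Open Scope ring_scope.

Definition th (p : {poly rat}) : {poly rat} := 'X * p^`().

Lemma thD p q : th (p + q) = th p + th q.
Proof. by rewrite /th derivD mulrDr. Qed.
Lemma thB p q : th (p - q) = th p - th q.
Proof. by rewrite /th derivB mulrBr. Qed.
Lemma thN p : th (- p) = - th p.
Proof. by rewrite /th derivN mulrN. Qed.
Lemma thM p q : th (p * q) = th p * q + p * th q.
Proof. rewrite /th derivM; ring. Qed.
Lemma thn (n : nat) : th n%:R = 0.
Proof. by rewrite /th -polyC_natr derivC mulr0. Qed.
Lemma th1 : th 1 = 0.
Proof. by rewrite -polyC1 /th derivC mulr0. Qed.
Lemma thX : th 'X = 'X.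
Proof. by rewrite /th derivX mulr1. Qed.
Lemma thexp p n : th (p ^+ n.+1) = p ^+ n *+ n.+1 * th p.
Proof. rewrite /th deriv_exp /=; rewrite -!mulrnAl; ring. Qed.
Lemma coef_th p m : (th p)`_m = p`_m * m%:R.
Proof.
rewrite /th coefXM; case: m => [|m] /=; first by rewrite mulr0.
by rewrite coef_deriv mulr_natr.
Qed.
Lemma thXn M : th ('X^M) = 'X^M *+ M.
Proof.
rewrite /th derivXn; case: M => [|m]; first by rewrite !mulr0n mulr0.
by rewrite /= mulrnAr -exprS.
Qed.
Lemma th_dvd M p : 'X^M %| p -> 'X^M %| th p.
Proof.
move=> /dvdpP [q ->]; rewrite thM thXn.
apply: dvdp_add; first exact: dvdp_mull (dvdpp _).
by rewrite mulrnAr -mulr_natr; apply: dvdp_mulr; apply: dvdp_mull; exact: dvdpp.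
Qed.

Fixpoint Tit (k : nat) : {poly rat} := if k is k'.+1 then 1 + 'X * Tit k' ^+ 4 else 1.

Lemma Tit_step k : 'X^k %| Tit k.+1 - Tit k.
Proof.
elim: k => [|k IH]; first by rewrite expr0 dvd1p.
have -> : Tit k.+2 - Tit k.+1 = 'X * ((Tit k.+1 - Tit k) *
   (Tit k.+1 ^+ 3 + Tit k.+1 ^+ 2 * Tit k + Tit k.+1 * Tit k ^+ 2 + Tit k ^+ 3)).
  by rewrite /=; ring.
rewrite exprS; apply: dvdp_mul; first exact: dvdpp.
exact: dvdp_mulr.
Qed.

Lemma Tit0 k : (Tit k)`_0 = 1.
Proof. by case: k => [|k] /=; rewrite ?coef1 // coefD coef1 coefXM addr0. Qed.

Lemma TitE M : 'X^M %| - 1%:R + Tit M - 'X * Tit M ^+ 4.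
Proof.
have -> : - 1%:R + Tit M - 'X * Tit M ^+ 4 = - (Tit M.+1 - Tit M) by rewrite /=; ring.
by rewrite dvdpNr Tit_step.
Qed.

Lemma dvd_cancel M (c p : {poly rat}) : c`_0 != 0 -> 'X^M %| c * p -> 'X^M %| p.
Proof.
move=> c0; rewrite Gauss_dvdpr //; apply: coprimep_expl.
have := coprimep_XsubC c 0; rewrite subr0 coprimep_sym => ->.
by rewrite /root horner_coef0.
Qed.

Lemma dvd_coef M (p : {poly rat}) m : 'X^M %| p -> (m < M)%N -> p`_m = 0.
Proof. by move=> /dvdpP [q ->] mM; rewrite coefMXn mM. Qed.
Lemma certL (R : comRingType) (x T u u1 u2 h0 h1 h2 h3 e0 e1 e2 e3 : R) :
  h0 = (2%:R*T^+2 - T^+3) -> h1 = (4%:R*T*u - 3%:R*T^+2*u) -> h2 = (4%:R*u^+2 + 4%:R*T*u1 - 6%:R*T*u^+2 - 3%:R*T^+2*u1) -> h3 = (12%:R*u*u1 - 6%:R*u^+3 + 4%:R*T*u2 - 18%:R*T*u*u1 - 3%:R*T^+2*u2) ->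
  e0 = (- 1%:R + T - x*T^+4) -> e1 = (u - 4%:R*x*T^+3*u - x*T^+4) -> e2 = (u1 - 12%:R*x*T^+2*u^+2 - 4%:R*x*T^+3*u1 - 8%:R*x*T^+3*u - x*T^+4) -> e3 = (u2 - 24%:R*x*T*u^+3 - 36%:R*x*T^+2*u*u1 - 36%:R*x*T^+2*u^+2 - 4%:R*x*T^+3*u2 - 12%:R*x*T^+3*u1 - 12%:R*x*T^+3*u - x*T^+4) ->
  (- T^+20 * (1 - 4%:R*x*T^+3)^+5) * ((6%:R * h0 + 33%:R * h1 + 54%:R * h2 + 27%:R * h3) - x * (120%:R * h0 + 496%:R * h1 + 640%:R * h2 + 256%:R * h3) - 6%:R)
  = (- 6%:R*T^+20 - 6%:R*T^+21 + 6%:R*T^+22 - 240%:R*x*T^+22 + 6%:R*x*T^+24 + 228%:R*x*T^+25 - 768%:R*x^+2*T^+25 + 288%:R*x^+2*T^+26 + 288%:R*x^+2*T^+27 - 234%:R*x^+2*T^+28 - 768%:R*x^+3*T^+29 - 1056%:R*x^+3*T^+30 - 240%:R*x^+3*T^+31 + 768%:R*x^+4*T^+33 + 240%:R*x^+4*T^+34) * e0 + (- 216%:R*T^+20*u + 162%:R*T^+20*u^+2 - 132%:R*T^+21 + 324%:R*T^+21*u + 99%:R*T^+22 + 2560%:R*x*T^+20*u - 1536%:R*x*T^+20*u^+2 + 1984%:R*x*T^+21 - 3840%:R*x*T^+21*u - 1488%:R*x*T^+22 - 6480%:R*x*T^+22*u^+2 - 5616%:R*x*T^+23*u + 5184%:R*x*T^+23*u^+2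 - 1452%:R*x*T^+24 + 3726%:R*x*T^+24*u + 1494%:R*x*T^+25 + 61440%:R*x^+2*T^+22*u^+2 + 51200%:R*x^+2*T^+23*u - 49152%:R*x^+2*T^+23*u^+2 + 6656%:R*x^+2*T^+24 - 27648%:R*x^+2*T^+24*u - 9216%:R*x^+2*T^+25 + 31104%:R*x^+2*T^+25*u^+2 + 34992%:R*x^+2*T^+26*u - 42768%:R*x^+2*T^+26*u^+2 + 6768%:R*x^+2*T^+27 - 33048%:R*x^+2*T^+27*u - 7830%:R*x^+2*T^+28 - 294912%:R*x^+3*T^+25*u^+2 - 356352%:R*x^+3*T^+26*u + 405504%:R*x^+3*T^+26*u^+2 - 43008%:R*x^+3*T^+27 + 294912%:R*x^+3*T^+27*u + 62976%:R*x^+3*T^+28 + 62208%:R*x^+3*T^+28*u^+2 - 1728%:R*x^+3*T^+29*u + 51840%:R*x^+3*T^+29*u^+2 - 3792%:R*x^+3*T^+30 + 37584%:R*x^+3*T^+30*u + 8352%:R*x^+3*T^+31 - 589824%:R*x^+4*T^+28*u^+2 + 180224%:R*x^+4*T^+29*u - 491520%:R*x^+4*T^+29*u^+2 + 20480%:R*x^+4*T^+30 - 380928%:R*x^+4*T^+30*u - 86016%:R*x^+4*T^+31 - 331776%:R*x^+4*T^+31*u^+2 - 138240%:R*x^+4*T^+32*u + 103680%:R*x^+4*T^+32*u^+2 - 13056%:R*x^+4*T^+33 + 57024%:R*x^+4*T^+33*u + 5904%:R*x^+4*T^+34 + 3145728%:R*x^+5*T^+31*u^+2 + 1048576%:R*x^+5*T^+32*u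 - 983040%:R*x^+5*T^+32*u^+2 + 114688%:R*x^+5*T^+33 - 442368%:R*x^+5*T^+33*u - 24576%:R*x^+5*T^+34) * e1 + (- 324%:R*T^+20*u - 216%:R*T^+21 + 486%:R*T^+21*u + 162%:R*T^+22 + 3072%:R*x*T^+20*u + 2560%:R*x*T^+21 - 4608%:R*x*T^+21*u - 1920%:R*x*T^+22 + 1296%:R*x*T^+23*u + 2160%:R*x*T^+24 - 4860%:R*x*T^+24*u - 1620%:R*x*T^+25 - 12288%:R*x^+2*T^+23*u - 28672%:R*x^+2*T^+24 + 46080%:R*x^+2*T^+24*u + 21504%:R*x^+2*T^+25 + 15552%:R*x^+2*T^+26*u - 5184%:R*x^+2*T^+27 + 11664%:R*x^+2*T^+27*u + 3888%:R*x^+2*T^+28 - 147456%:R*x^+3*T^+26*u + 98304%:R*x^+3*T^+27 - 110592%:R*x^+3*T^+27*u - 73728%:R*x^+3*T^+28 - 103680%:R*x^+3*T^+29*u - 6912%:R*x^+3*T^+30 + 15552%:R*x^+3*T^+30*u + 5184%:R*x^+3*T^+31 + 983040%:R*x^+4*T^+29*u - 65536%:R*x^+4*T^+30 - 147456%:R*x^+4*T^+30*u + 49152%:R*x^+4*T^+31 + 165888%:R*x^+4*T^+32*u + 27648%:R*x^+4*T^+33 - 62208%:R*x^+4*T^+33*u - 20736%:R*x^+4*T^+34 - 1572864%:R*x^+5*T^+32*u - 131072%:R*x^+5*T^+33 + 589824%:R*x^+5*T^+33*u + 98304%:R*x^+5*T^+34) * e2 + (- 108%:R*T^+21 + 81%:R*T^+22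 + 1024%:R*x*T^+21 - 768%:R*x*T^+22 + 1728%:R*x*T^+24 - 1296%:R*x*T^+25 - 16384%:R*x^+2*T^+24 + 12288%:R*x^+2*T^+25 - 10368%:R*x^+2*T^+27 + 7776%:R*x^+2*T^+28 + 98304%:R*x^+3*T^+27 - 73728%:R*x^+3*T^+28 + 27648%:R*x^+3*T^+30 - 20736%:R*x^+3*T^+31 - 262144%:R*x^+4*T^+30 + 196608%:R*x^+4*T^+31 - 27648%:R*x^+4*T^+33 + 20736%:R*x^+4*T^+34 + 262144%:R*x^+5*T^+33 - 196608%:R*x^+5*T^+34) * e3.
Proof. by move=> -> -> -> -> -> -> -> ->; ring. Qed.

Lemma certF (R : comRingType) (x T : R) :
  let g := 2%:R * T^+2 - T^+3 - 1 in
  - T^+12 * (x * (x^+2 + 11%:R * x - 1) * g^+0 + (4%:R * x^+3 + 25%:R * x^+2 - 14%:R * x + 1) * g^+1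
     + x * (6%:R * x^+2 + 17%:R * x + 3%:R) * g^+2 + x^+2 * (4%:R * x + 3%:R) * g^+3 + x^+3 * g^+4)
  = (- T^+12 - T^+13 + T^+14 + 16%:R*x*T^+12 + 16%:R*x*T^+13 - 24%:R*x*T^+14 - 4%:R*x*T^+15 + 9%:R*x*T^+16 - 2%:R*x*T^+17 + 16%:R*x^+2*T^+16 - 32%:R*x^+2*T^+17 + 24%:R*x^+2*T^+18 - 8%:R*x^+2*T^+19 + x^+2*T^+20) * (- 1%:R + T - x*T^+4).
Proof. move=> g; rewrite /g; ring. Qed.


Definition Lop (H : {poly rat}) := (6%:R * H + 33%:R * th H + 54%:R * th (th H) + 27%:R * th (th (th H)))
  - 'X * (120%:R * H + 496%:R * th H + 640%:R * th (th H) + 256%:R * th (th (th H))) - 6%:R.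

Lemma LopH (T : {poly rat}) M : T`_0 = 1 -> 'X^M %| - 1%:R + T - 'X*T^+4 ->
  'X^M %| Lop (2%:R*T^+2 - T^+3).
Proof.
move=> T0 hE.
  have eh1 : th ((2%:R*T^+2 - T^+3)) = (4%:R*T*(th T) - 3%:R*T^+2*(th T)).
  by rewrite !(thB, thD, thN, thM, thn, thX, thexp); ring.
  have eh2 : th ((4%:R*T*(th T) - 3%:R*T^+2*(th T))) = (4%:R*(th T)^+2 + 4%:R*T*(th (th T)) - 6%:R*T*(th T)^+2 - 3%:R*T^+2*(th (th T))).
  by rewrite !(thB, thD, thN, thM, thn, thX, thexp); ring.
  have eh3 : th ((4%:R*(th T)^+2 + 4%:R*T*(th (th T)) - 6%:R*T*(th T)^+2 - 3%:R*T^+2*(th (th T)))) = (12%:R*(th T)*(th (th T)) - 6%:R*(th T)^+3 + 4%:R*T*(th (th (th T))) - 18%:R*T*(th T)*(th (th T)) - 3%:R*T^+2*(th (th (th T)))).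
  by rewrite !(thB, thD, thN, thM, thn, thX, thexp); ring.
  have ee1 : th ((- 1%:R + T - 'X*T^+4)) = ((th T) - 4%:R*'X*T^+3*(th T) - 'X*T^+4).
  by rewrite !(thB, thD, thN, thM, thn, thX, thexp); ring.
  have ee2 : th (((th T) - 4%:R*'X*T^+3*(th T) - 'X*T^+4)) = ((th (th T)) - 12%:R*'X*T^+2*(th T)^+2 - 4%:R*'X*T^+3*(th (th T)) - 8%:R*'X*T^+3*(th T) - 'X*T^+4).
  by rewrite !(thB, thD, thN, thM, thn, thX, thexp); ring.
  have ee3 : th (((th (th T)) - 12%:R*'X*T^+2*(th T)^+2 - 4%:R*'X*T^+3*(th (th T)) - 8%:R*'X*T^+3*(th T) - 'X*T^+4)) = ((th (th (th T))) - 24%:R*'X*T*(th T)^+3 - 36%:R*'X*T^+2*(th T)*(th (th T)) - 36%:R*'X*T^+2*(th T)^+2 - 4%:R*'X*T^+3*(th (th (th T))) - 12%:R*'X*T^+3*(th (th T)) - 12%:R*'X*T^+3*(th T) - 'X*T^+4).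
  by rewrite !(thB, thD, thN, thM, thn, thX, thexp); ring.
  have d1 := @th_dvd M _ hE.
  have d2 := @th_dvd M _ d1.
  have d3 := @th_dvd M _ d2.
  apply: (@dvd_cancel M (- T^+20 * (1 - 4%:R*'X*T^+3)^+5)).
    rewrite -horner_coef0 in T0; rewrite -horner_coef0 !hornerE T0.
    by vm_compute.
  set H := 2%:R*T^+2 - T^+3. set E := - 1%:R + T - 'X*T^+4.
  have C := @certL _ 'X T (th T) (th (th T)) (th (th (th T))) H (th H) (th (th H)) (th (th (th H)))
     E (th E) (th (th E)) (th (th (th E))) erefl eh1 ltac:(by rewrite eh1 eh2) ltac:(by rewrite eh1 eh2 eh3)
     erefl ee1 ltac:(by rewrite ee1 ee2) ltac:(by rewrite ee1 ee2 ee3).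
  rewrite /Lop C.
  apply: dvdp_add; last exact: dvdp_mull d3.
  apply: dvdp_add; last exact: dvdp_mull d2.
  apply: dvdp_add; [exact: dvdp_mull hE | exact: dvdp_mull d1].
Qed.

Lemma coef_Lop (H : {poly rat}) m : (Lop H)`_m =
  H`_m * (6 + 33 * m + 54 * m ^ 2 + 27 * m ^ 3)%N%:R
  - (if m is m'.+1 then H`_m' * (120 + 496 * m' + 640 * m' ^ 2 + 256 * m' ^ 3)%N%:R else 0)
  - (if m is 0 then 6%:R else 0).
Proof.
rewrite /Lop !coefB !coefD coefXM !coefD -!polyC_natr !coefCM !coef_th coefC.
case: m => [|m] /=; ring.
Qed.

Definition hc (m : nat) : rat := (2 * (4 * m + 1)`!)%:R / ((m + 1)`! * (3 * m + 2)`!)%:R.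

Lemma hc0 : hc 0 = 1.
Proof. by vm_compute. Qed.

Lemma fact_neq0 k : (k`!)%:R != 0 :> rat.
Proof. by rewrite pnatr_eq0 -lt0n fact_gt0. Qed.

Lemma hc_rec n : hc n.+1 * (3 * (n + 2) * (3 * n + 4) * (3 * n + 5))%N%:R
   = hc n * (4 * (4 * n + 2) * (4 * n + 3) * (4 * n + 5))%N%:R.
Proof.
rewrite /hc.
have -> : (4 * n.+1 + 1 = (4 * n + 1).+4)%N by lia.
have -> : (n.+1 + 1 = (n + 1).+1)%N by lia.
have -> : (3 * n.+1 + 2 = (3 * n + 2).+3)%N by lia.
rewrite !factS.
have := fact_neq0 (4 * n + 1); have := fact_neq0 (n + 1); have := fact_neq0 (3 * n + 2).
move: (4 * n + 1)`! (n + 1)`! (3 * n + 2)`! => A B C hC hB hA.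
rewrite !natrM.
field.
by rewrite hB hC /= -!(natrM, natrD) ?natr1 ?nat1r !pnatr_eq0 ?addnS.
Qed.

Lemma Hcoef (T : {poly rat}) M : T`_0 = 1 -> 'X^M %| - 1%:R + T - 'X*T^+4 ->
  forall m, (m < M)%N -> (2%:R*T^+2 - T^+3)`_m = hc m.
Proof.
move=> T0 hE; have hL := LopH T M T0 hE.
elim=> [|m IH] hm.
  have := @dvd_coef M _ 0 hL hm; rewrite coef_Lop hc0.
  have -> : (6 + 33 * 0 + 54 * 0 ^ 2 + 27 * 0 ^ 3 = 6)%N by [].
  move=> h; lra.
have := @dvd_coef M _ m.+1 hL hm; rewrite coef_Lop (IH (ltnW hm)) subr0.
have -> : (6 + 33 * m.+1 + 54 * m.+1 ^ 2 + 27 * m.+1 ^ 3 = 3 * (m + 2) * (3 * m + 4) * (3 * m + 5))%N by ring.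
have -> : (120 + 496 * m + 640 * m ^ 2 + 256 * m ^ 3 = 4 * (4 * m + 2) * (4 * m + 3) * (4 * m + 5))%N by ring.
rewrite -hc_rec => /eqP; rewrite subr_eq0 => /eqP; apply: mulIf.
by rewrite pnatr_eq0 -lt0n !muln_gt0 !addn_gt0 !orbT.
Qed.

Lemma fps_pow_coef (a : fps rat) (p : {poly rat}) n : (forall k, (k <= n)%N -> a k = p`_k) ->
  forall j m, (m <= n)%N -> fps_pow a j m = (p ^+ j)`_m.
Proof.
move=> ha; elim=> [|j IH] m hm.
  by rewrite /fps_pow /= /fps_one expr0 coef1; case: m {hm}.
rewrite exprS coefM /fps_pow iterS -/(fps_pow a j) /fps_mul; apply: eq_bigr => i _.
have hi : (i <= n)%N by apply: leq_trans hm; rewrite -ltnS.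
by rewrite ha // IH // (leq_trans (leq_subr _ _) hm).
Qed.

Lemma fps_mul_poly (q : {poly rat}) (b : fps rat) (p : {poly rat}) n :
  (forall m, (m <= n)%N -> b m = p`_m) -> fps_mul (fps_of_poly q) b n = (q * p)`_n.
Proof.
move=> hb; rewrite /fps_mul coefM; apply: eq_bigr => i _.
by rewrite /fps_of_poly hb // leq_subr.
Qed.

Lemma part1 :
  (let g : fps rat := @gcoef rat in
   let P (p : {poly rat}) (k : nat) : fps rat := fps_mul (fps_of_poly p) (fps_pow g k) in
   forall n : nat,
     fps_add (P ('X * ('X^2 + 11%:R *: 'X - 1)) 0%N)
      (fps_add (P (4%:R *: 'X^3 + 25%:R *: 'X^2 - 14%:R *: 'X + 1) 1%N)
       (fps_add (P ('X * (6%:R *: 'X^2 + 17%:R *: 'X + 3%:R)) 2%N)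
        (fps_add (P ('X^2 * (4%:R *: 'X + 3%:R)) 3%N)
                 (P ('X^3) 4%N)))) n = 0).
Proof.
move=> g P n.
pose M := n.+1; pose T := Tit M; pose G := 2%:R*T^+2 - T^+3 - 1.
have hg : forall k, (k <= n)%N -> g k = G`_k.
  move=> k hk; rewrite /G coefB coef1 (@Hcoef T M (Tit0 M) (TitE M) k hk).
  by case: k {hk} => [|k]; rewrite ?hc0 ?subrr // subr0.
have hP : forall q k, P q k n = (q * G ^+ k)`_n.
  by move=> q k; rewrite /P; apply: fps_mul_poly => m hm; exact: (@fps_pow_coef _ _ _ hg k m hm).
rewrite /fps_add !hP -!coefD; apply: (@dvd_coef M) => //.
apply: (@dvd_cancel M (- T^+12)).
  have T0 := Tit0 M; rewrite -horner_coef0 in T0.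
  by rewrite -horner_coef0 !hornerE ?T0 expr1n oppr_eq0 oner_eq0.
rewrite -!mul_polyC !polyC_natr.
have -> : - T^+12 * ('X * ('X^2 + 11%:R * 'X - 1) * G ^+ 0 + ((4%:R * 'X^3 + 25%:R * 'X^2 - 14%:R * 'X + 1) * G ^+ 1 +
   ('X * (6%:R * 'X^2 + 17%:R * 'X + 3%:R) * G ^+ 2 + ('X^2 * (4%:R * 'X + 3%:R) * G ^+ 3 + 'X^3 * G ^+ 4))))
   = (- T^+12 - T^+13 + T^+14 + 16%:R*'X*T^+12 + 16%:R*'X*T^+13 - 24%:R*'X*T^+14 - 4%:R*'X*T^+15 + 9%:R*'X*T^+16 - 2%:R*'X*T^+17 + 16%:R*'X^2*T^+16 - 32%:R*'X^2*T^+17 + 24%:R*'X^2*T^+18 - 8%:R*'X^2*T^+19 + 'X^2*T^+20) * (- 1%:R + T - 'X*T^+4) by rewrite /G; ring.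
exact: dvdp_mull (TitE M).
Qed.

Definition rr : rat := 27%:R / 256%:R.
Lemma rr_ge0 : 0 <= rr.
Proof. by rewrite /rr divr_ge0 ?ler0n. Qed.
Lemma rrX_ge0 k : 0 <= rr ^+ k.
Proof. exact: exprn_ge0 rr_ge0. Qed.

Definition ev N (p : {poly rat}) := \sum_(k < N.+1) p`_k * rr ^+ k.
Definition tr N (p : {poly rat}) : {poly rat} := \poly_(k < N.+1) p`_k.
Definition nonneg (p : {poly rat}) := forall k, 0 <= p`_k.

Lemma horner_tr N (p : {poly rat}) : (tr N p).[rr] = ev N p.
Proof.
rewrite (@horner_coef_wide _ N.+1 (tr N p) rr (size_poly _ _)) /ev.
by apply: eq_bigr => i _; rewrite coef_poly ltn_ord.
Qed.

Lemma ev_horner_eq N (p : {poly rat}) : (size p <= N.+1)%N -> ev N p = p.[rr].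
Proof. by move=> hs; rewrite (@horner_coef_wide _ N.+1 p rr hs). Qed.

Lemma ev_le N (p q : {poly rat}) : (forall k, (k <= N)%N -> p`_k <= q`_k) -> ev N p <= ev N q.
Proof.
move=> h; apply: ler_sum => i _; apply: ler_wpM2r; first exact: rrX_ge0.
by apply: h; rewrite -ltnS.
Qed.

Lemma ev_eq N (p q : {poly rat}) : (forall k, (k <= N)%N -> p`_k = q`_k) -> ev N p = ev N q.
Proof. by move=> h; apply: eq_bigr => i _; rewrite h // -ltnS. Qed.

Lemma ev_ge0 N (p : {poly rat}) : nonneg p -> 0 <= ev N p.
Proof. by move=> hp; apply: sumr_ge0 => i _; rewrite mulr_ge0 ?rrX_ge0. Qed.

Lemma ev_horner_ge N (p : {poly rat}) : nonneg p -> ev N p <= p.[rr].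
Proof.
move=> hp; pose n := maxn (size p) N.+1.
rewrite (@horner_coef_wide _ n p rr (leq_maxl _ _)) /ev.
rewrite (big_ord_widen _ (fun i => p`_i * rr ^+ i) (leq_maxr (size p) N.+1)).
rewrite [X in _ <= X](bigID (fun i : 'I_n => (i < N.+1)%N)) /= lerDl.
by apply: sumr_ge0 => i _; rewrite mulr_ge0 ?rrX_ge0.
Qed.

Lemma nonneg_mul (p q : {poly rat}) : nonneg p -> nonneg q -> nonneg (p * q).
Proof. by move=> hp hq k; rewrite coefM; apply: sumr_ge0 => i _; rewrite mulr_ge0. Qed.
Lemma nonneg_exp (p : {poly rat}) j : nonneg p -> nonneg (p ^+ j).
Proof.
move=> hp; elim: j => [|j IH]; first by move=> k; rewrite expr0 coef1; case: (k == 0)%N.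
by rewrite exprS; apply: nonneg_mul.
Qed.
Lemma nonneg_Tit k : nonneg (Tit k).
Proof.
elim: k => [|k IH] i; first by rewrite /= coef1; case: (i == 0)%N.
rewrite /= coefD coef1 coefXM; apply: addr_ge0; first by case: (i == 0)%N.
by case: (i == 0)%N => //; apply: nonneg_exp.
Qed.
Lemma nonneg_tr N (p : {poly rat}) : nonneg p -> nonneg (tr N p).
Proof. by move=> hp k; rewrite coef_poly; case: ifP. Qed.

Lemma cle_mul (p p' q q' : {poly rat}) : nonneg p -> nonneg q -> (forall k, p`_k <= p'`_k) ->
  (forall k, q`_k <= q'`_k) -> forall k, (p * q)`_k <= (p' * q')`_k.
Proof. by move=> hp hq h1 h2 k; rewrite !coefM; apply: ler_sum => i _; apply: ler_pM. Qed.
Lemma cle_exp (p p' : {poly rat}) j : nonneg p -> (forall k, p`_k <= p'`_k) -> forall k, (p ^+ j)`_k <= (p' ^+ j)`_k.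
Proof.
move=> hp h; elim: j => [|j IH] k; first by rewrite !expr0.
by rewrite !exprS; apply: cle_mul => //; apply: nonneg_exp.
Qed.
Lemma cle_tr N (p : {poly rat}) : nonneg p -> forall k, (tr N p)`_k <= p`_k.
Proof. by move=> hp k; rewrite coef_poly; case: ifP. Qed.

Lemma coefM_eq N (p p' q q' : {poly rat}) : (forall i, (i <= N)%N -> p`_i = p'`_i) ->
  (forall i, (i <= N)%N -> q`_i = q'`_i) -> forall k, (k <= N)%N -> (p * q)`_k = (p' * q')`_k.
Proof.
move=> hp hq k hk; rewrite !coefM; apply: eq_bigr => i _.
have hi : (i <= N)%N by apply: leq_trans hk; rewrite -ltnS.
by rewrite hp // hq // (leq_trans (leq_subr _ _) hk).
Qed.
Lemma coefX_eq N (p p' : {poly rat}) : (forall i, (i <= N)%N -> p`_i = p'`_i) ->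
  forall j k, (k <= N)%N -> (p ^+ j)`_k = (p' ^+ j)`_k.
Proof.
move=> hp; elim=> [|j IH] k hk; first by rewrite !expr0.
by rewrite !exprS; apply: (@coefM_eq N _ _ _ _ hp IH).
Qed.
Lemma coef_tr N (p : {poly rat}) k : (k <= N)%N -> (tr N p)`_k = p`_k.
Proof. by move=> hk; rewrite coef_poly ltnS hk. Qed.

Lemma Tit_stab k M : (k < M)%N -> (Tit M)`_k = (Tit k.+1)`_k.
Proof.
move=> hk; rewrite -(subnKC hk); elim: (M - k.+1)%N => [|d IH]; first by rewrite addn0.
rewrite -IH addnS; apply/eqP; rewrite -subr_eq0; apply/eqP.
rewrite -coefB; apply: (@dvd_coef (k.+1 + d)); first exact: Tit_step.
by rewrite ltn_addr.
Qed.

Lemma TitS k : Tit k.+1 = 1 + 'X * Tit k ^+ 4.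
Proof. by []. Qed.

Lemma coefXS (p : {poly rat}) i : ('X * p)`_i.+1 = p`_i.
Proof. by rewrite coefXM. Qed.
Lemma coef1S i : (1 : {poly rat})`_i.+1 = 0.
Proof. by rewrite coef1. Qed.

Definition vv N := ev N (Tit N.+1).
Definition ss N j := ev N (Tit N.+1 ^+ j).

Lemma vv0 : vv 0 = 1.
Proof. by rewrite /vv /ev big_ord1 Tit0 expr0 mulr1. Qed.

Lemma vvS N : vv N.+1 = 1 + rr * ss N 4.
Proof.
rewrite /vv /ev big_ord_recl Tit0 expr0 mulr1; congr (_ + _).
rewrite /ss /ev mulr_sumr; apply: eq_bigr => i _.
by rewrite lift0 (TitS N.+1) coefD coef1S coefXS add0r [rr ^+ i.+1]exprS mulrCA.
Qed.

Lemma ss_up N j : ss N j <= vv N ^+ j.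
Proof.
rewrite /ss (@ev_eq N _ (tr N (Tit N.+1) ^+ j)); last first.
  move=> k hk; apply: (@coefX_eq N) => // i hi; by rewrite coef_tr.
rewrite /vv -[ev N (Tit N.+1)]horner_tr -horner_exp; apply: ev_horner_ge.
by apply: nonneg_exp; apply: nonneg_tr; apply: nonneg_Tit.
Qed.

Lemma ss_low N j K : (0 < j)%N -> (j * K <= N)%N -> vv K ^+ j <= ss N j.
Proof.
move=> j0 hjK.
have KN : (K <= N)%N by apply: leq_trans hjK; rewrite leq_pmull.
have -> : vv K = ev K (Tit N.+1).
  apply: ev_eq => k hk; rewrite (@Tit_stab k K.+1) ?ltnS // (@Tit_stab k N.+1) //.
  by rewrite ltnS (leq_trans hk KN).
rewrite -horner_tr -horner_exp -(@ev_horner_eq N); last first.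
  have hs : ((size (tr K (Tit N.+1))).-1 <= K)%N.
    by have := size_poly K.+1 (fun k => (Tit N.+1)`_k); rewrite /tr; lia.
  apply: leq_trans (size_poly_exp_leq _ _) _; rewrite ltnS.
  by apply: leq_trans hjK; rewrite mulnC leq_mul2l hs orbT.
apply: ev_le => k _; apply: cle_exp; first by apply: nonneg_tr; apply: nonneg_Tit.
by apply: cle_tr; apply: nonneg_Tit.
Qed.

Lemma vv_ge0 N : 0 <= vv N.
Proof. by apply: ev_ge0; apply: nonneg_Tit. Qed.

Lemma rr43 : rr * (4%:R / 3%:R) ^+ 4 = 1 / 3%:R.
Proof. by rewrite /rr; field. Qed.

Lemma vv_le N : vv N <= 4%:R / 3%:R.
Proof.
elim: N => [|N IH]; first by rewrite vv0; lra.
rewrite vvS.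
have h1 : ss N 4 <= (4%:R / 3%:R) ^+ 4.
  have h0 : 0 <= 4%:R / 3%:R :> rat by rewrite divr_ge0 ?ler0n.
  apply: le_trans (ss_up N 4) _; apply: lerXn2r; [rewrite nnegrE; exact: vv_ge0 | rewrite nnegrE; exact: h0 | exact: IH].
have h2 : rr * ss N 4 <= rr * (4%:R / 3%:R) ^+ 4 by apply: ler_wpM2l; [exact: rr_ge0 | exact: h1].
rewrite rr43 in h2; move: (rr * ss N 4) h2 => y h2; lra.
Qed.

Lemma vv_mono N : vv N <= vv N.+1.
Proof.
rewrite {2}/vv /ev big_ord_recr.
rewrite (eq_bigr (fun i : 'I_N.+1 => (Tit N.+1)`_i * rr ^+ i)); last first.
  by move=> i _; rewrite (@Tit_stab i N.+2) ?(@Tit_stab i N.+1) // ltnS // ltnW.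
rewrite -/(ev N (Tit N.+1)) -/(vv N).
rewrite lerDl; apply: mulr_ge0; [exact: nonneg_Tit | exact: rrX_ge0].
Qed.

Lemma vv_fix K : 1 + rr * vv K ^+ 4 <= vv (4 * K).+1.
Proof.
rewrite vvS lerD2l; apply: ler_wpM2l; first exact: rr_ge0.
exact: ss_low.
Qed.

Lemma gG M k : (k < M)%N -> gcoef rat k = (2%:R * Tit M ^+ 2 - Tit M ^+ 3 - 1)`_k.
Proof.
move=> hk; rewrite coefB coef1 (@Hcoef (Tit M) M (Tit0 M) (TitE M) k hk).
by case: k {hk} => [|k]; rewrite ?hc0 ?subrr // subr0.
Qed.

Definition Sr n := \sum_(k < n) gcoef rat k * rr ^+ k.

Lemma gcoef_ge0 k : 0 <= gcoef rat k.
Proof. by case: k => [|k] //=; rewrite divr_ge0 ?ler0n. Qed.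

Lemma Sr_mono n m : (n <= m)%N -> Sr n <= Sr m.
Proof.
move=> /subnKC <-; elim: (m - n)%N => [|d IH]; first by rewrite addn0.
apply: le_trans IH _; rewrite addnS /Sr big_ord_recr /= lerDl.
by rewrite mulr_ge0 ?gcoef_ge0 ?rrX_ge0.
Qed.

Lemma SrE N : Sr N.+1 = 2%:R * ss N 2 - ss N 3 - 1.
Proof.
rewrite /Sr /ss /ev.
rewrite (eq_bigr (fun k : 'I_N.+1 => 2%:R * ((Tit N.+1 ^+ 2)`_k * rr ^+ k)
   - (Tit N.+1 ^+ 3)`_k * rr ^+ k - (k == 0%N :> nat)%:R * rr ^+ k)); last first.
  move=> i _; rewrite (@gG N.+1) // !coefB coef1 -polyC_natr coefCM; ring.
rewrite !sumrB -mulr_sumr; congr (_ - _).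
rewrite big_ord_recl /= expr0 mulr1 big1 ?addr0 // => i _.
by rewrite mul0r.
Qed.

Lemma I5 N : Sr N.+1 + vv N ^+ 3 <= 2%:R * vv (3 * N) ^+ 2 - 1.
Proof.
have h1 : Sr N.+1 <= Sr (3 * N).+1 by apply: Sr_mono; rewrite ltnS leq_pmull.
have h2 := ss_up (3 * N) 2.
have h3 : vv N ^+ 3 <= ss (3 * N) 3 by apply: ss_low.
rewrite (SrE (3 * N)) in h1; move: (Sr N.+1) (vv N ^+ 3) (ss (3 * N) 2) (ss (3 * N) 3) (vv (3 * N) ^+ 2) h1 h2 h3.
move=> a b c d e h1 h2 h3; lra.
Qed.

Lemma I6 K : 2%:R * vv K ^+ 2 - vv (2 * K) ^+ 3 - 1 <= Sr (2 * K).+1.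
Proof.
have h2 : vv K ^+ 2 <= ss (2 * K) 2 by apply: ss_low.
have h3 := ss_up (2 * K) 3.
rewrite SrE; move: (vv K ^+ 2) (ss (2 * K) 2) (ss (2 * K) 3) (vv (2 * K) ^+ 3) h2 h3.
move=> a b c d h2 h3; lra.
Qed.

Lemma cvgXn (R : realType) (u : nat -> R) (l : R) k : u @ \oo --> l -> (fun n => u n ^+ k) @ \oo --> l ^+ k.
Proof.
move=> hu; elim: k => [|k IH].
  have -> : (fun n => u n ^+ 0) = (fun=> 1) by apply: funext => n; rewrite expr0.
  by rewrite expr0; exact: cvg_cst.
have -> : (fun n => u n ^+ k.+1) = (u \* (fun n => u n ^+ k)) by apply: funext => n; rewrite exprS.
by rewrite exprS; apply: cvgM.
Qed.

Lemma ratr_gcoef (R : realType) k : ratr (gcoef rat k) = gcoef R k.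
Proof. case: k => [|k]; rewrite /gcoef /=; [by rewrite rmorph0 | by rewrite fmorph_div !rmorph_nat]. Qed.

Lemma ratr_rr (R : realType) : ratr rr = (27 / 256 : R).
Proof. by rewrite /rr fmorph_div !rmorph_nat. Qed.

Lemma seriesE (R : realType) :
  [series @gcoef R k * (27 / 256 : R) ^+ k]_k = (fun n => ratr (Sr n)).
Proof.
apply: funext => n; rewrite seriesEord /= /Sr rmorph_sum; apply: eq_bigr => i _.
by rewrite rmorphM rmorphXn -(ratr_rr R) -(ratr_gcoef R).
Qed.

Lemma ev_fromN (P : nat -> Prop) N : (forall M, (N <= M)%N -> P M) -> \forall M \near \oo, P M.
Proof. by move=> h; apply: filterS (nbhs_infty_ge N) => M /h. Qed.

Lemma tr_fix (R : realType) (a b c : rat) : 1 + a * b ^+ 4 <= c -> 1 + ratr a * ratr b ^+ 4 <= (ratr c : R).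
Proof.
move=> h; have : ratr (1 + a * b ^+ 4) <= ratr c :> R by rewrite ler_rat.
rewrite !(rmorphD, rmorphB, rmorphM, rmorphXn, rmorphN, rmorph1, rmorph_nat); exact: id.
Qed.
Lemma tr_I5 (R : realType) (a b c : rat) : a + b ^+ 3 <= 2%:R * c ^+ 2 - 1 ->
  ratr a + ratr b ^+ 3 <= 2%:R * ratr c ^+ 2 - 1 :> R.
Proof.
move=> h; have : ratr (a + b ^+ 3) <= ratr (2%:R * c ^+ 2 - 1) :> R by rewrite ler_rat.
rewrite !(rmorphD, rmorphB, rmorphM, rmorphXn, rmorphN, rmorph1, rmorph_nat); exact: id.
Qed.
Lemma tr_I6 (R : realType) (a b c : rat) : 2%:R * a ^+ 2 - b ^+ 3 - 1 <= c ->
  2%:R * ratr a ^+ 2 - ratr b ^+ 3 - 1 <= ratr c :> R.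
Proof.
move=> h; have : ratr (2%:R * a ^+ 2 - b ^+ 3 - 1) <= ratr c :> R by rewrite ler_rat.
rewrite !(rmorphD, rmorphB, rmorphM, rmorphXn, rmorphN, rmorph1, rmorph_nat); exact: id.
Qed.

Lemma part2 (R : realType) :
  [series @gcoef R k * (27 / 256 : R) ^+ k]_k @ \oo --> (5 / 27 : R).
Proof.
rewrite seriesE.
pose V : nat -> R := fun n => ratr (vv n).
pose S : nat -> R := fun n => ratr (Sr n).
have r0 : (0 : R) < 27 / 256 by rewrite divr_gt0 ?ltr0n.
have Vmono : nondecreasing_seq V.
  by apply/nondecreasing_seqP => n; rewrite /V ler_rat; exact: vv_mono.
have Vmono' : forall n m, (n <= m)%N -> V n <= V m by move=> n m; apply: Vmono.
have Vge0 : forall n, 0 <= V n by move=> n; rewrite /V ler0q; exact: vv_ge0.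
have r43 : ratr (4%:R / 3%:R) = (4%:R / 3%:R : R) by rewrite fmorph_div !rmorph_nat.
have Vle : forall n, V n <= 4%:R / 3%:R by move=> n; rewrite /V -r43 ler_rat; exact: vv_le.
have Vub : has_ubound (range V) by exists (4%:R / 3%:R) => _ [n _ <-]; exact: Vle.
have hV := nondecreasing_cvgn Vmono Vub.
move: hV; set L := sup (range V) => hV.
have VL : forall n, V n <= L.
  by move=> n; apply: (cvgr_to_ge hV); apply: (@ev_fromN _ n) => M; apply: Vmono'.
have L43 : L <= 4%:R / 3%:R by apply: (cvgr_to_le hV); apply: nearW => n; exact: Vle.
have L1 : 1 <= L by have := VL 0%N; rewrite /V vv0 rmorph1.
have Lfix : 1 + 27 / 256 * L ^+ 4 <= L.
  have h : forall K, V K ^+ 4 <= (L - 1) / (27 / 256).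
    move=> K; rewrite ler_pdivlMr // mulrC.
    have h := @tr_fix R _ _ _ (vv_fix K).
    have h2 := VL (4 * K).+1; rewrite -(ratr_rr R) /V in h2 *.
    move: h h2; move: (ratr rr) (ratr (vv K)) (ratr (vv (4 * K).+1)) => a b c h h2; lra.
  have hh : L ^+ 4 <= (L - 1) / (27 / 256).
    by apply: (cvgr_to_le (@cvgXn R _ _ 4 hV)); apply: nearW; exact: h.
  rewrite ler_pdivlMr // in hh; move: (L ^+ 4) hh => x hh; lra.
have LE : L = 4%:R / 3%:R.
  have e : 27 / 256 * L ^+ 4 - L + 1 = 27 / 256 * ((L - 4%:R / 3%:R) ^+ 2 * (L ^+ 2 + 8%:R / 3%:R * L + 16%:R / 3%:R)).
    by field.
  have q0 : 0 < L ^+ 2 + 8%:R / 3%:R * L + 16%:R / 3%:R.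
    have : 0 <= L ^+ 2 by rewrite sqr_ge0.
    move: (L ^+ 2) => a ha; lra.
  have : 27 / 256 * ((L - 4%:R / 3%:R) ^+ 2 * (L ^+ 2 + 8%:R / 3%:R * L + 16%:R / 3%:R)) <= 0.
    by rewrite -e; lra.
  rewrite pmulr_rle0 // pmulr_lle0 // => hsq.
  have : (L - 4%:R / 3%:R) ^+ 2 = 0 by apply/eqP; rewrite eq_le hsq sqr_ge0.
  by move/eqP; rewrite sqrf_eq0 subr_eq0 => /eqP.
have Smono : nondecreasing_seq S.
  by apply/nondecreasing_seqP => n; rewrite /S ler_rat; apply: Sr_mono.
have Smono' : forall n m, (n <= m)%N -> S n <= S m by move=> n m; apply: Smono.
have I5R : forall N, S N.+1 + V N ^+ 3 <= 2%:R * L ^+ 2 - 1.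
  move=> N; have h := @tr_I5 R _ _ _ (I5 N).
  have h2 : V (3 * N) ^+ 2 <= L ^+ 2 by apply: lerXn2r; rewrite ?nnegrE ?Vge0 ?VL ?(le_trans (Vge0 0%N) (VL 0%N)).
  rewrite /S /V in h h2 *; move: h h2.
  move: (ratr (Sr N.+1)) (ratr (vv N)) (ratr (vv (3 * N))) => a b c h h2; lra.
have Sub : forall N, S N <= 2%:R * L ^+ 2 - 1 - L ^+ 3.
  move=> N; have h : forall M, (N <= M)%N -> V M ^+ 3 <= 2%:R * L ^+ 2 - 1 - S N.
    move=> M hM; have := I5R M; have := Smono' N M.+1 (leqW hM).
    move: (S N) (S M.+1) (V M ^+ 3) => a b c h1 h2; lra.
  have hh : L ^+ 3 <= 2%:R * L ^+ 2 - 1 - S N.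
    by apply: (cvgr_to_le (@cvgXn R _ _ 3 hV)); exact: (@ev_fromN _ N h).
  move: (S N) (L ^+ 3) hh => a b hh; lra.
have Sb : has_ubound (range S).
  by exists (2%:R * L ^+ 2 - 1 - L ^+ 3) => _ [n _ <-]; exact: Sub.
have hS := nondecreasing_cvgn Smono Sb.
move: hS; set Ls := sup (range S) => hS.
have SL : forall n, S n <= Ls.
  by move=> n; apply: (cvgr_to_ge hS); apply: (@ev_fromN _ n) => M; apply: Smono'.
have Ls1 : Ls <= 2%:R * L ^+ 2 - 1 - L ^+ 3 by apply: (cvgr_to_le hS); apply: nearW => n; exact: Sub.
have Ls2 : 2%:R * L ^+ 2 - L ^+ 3 - 1 <= Ls.
  have h : forall K, V K ^+ 2 <= (Ls + L ^+ 3 + 1) / 2%:R.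
    move=> K; rewrite ler_pdivlMr ?ltr0n //.
    have h := @tr_I6 R _ _ _ (I6 K).
    have h2 : V (2 * K) ^+ 3 <= L ^+ 3 by apply: lerXn2r; rewrite ?nnegrE ?Vge0 ?VL ?(le_trans (Vge0 0%N) (VL 0%N)).
    have h3 := SL (2 * K).+1.
    rewrite /S /V in h h2 h3 *; move: h h2 h3.
    move: (ratr (Sr (2 * K).+1)) (ratr (vv K)) (ratr (vv (2 * K))) => a b c h h2 h3; lra.
  have hh : L ^+ 2 <= (Ls + L ^+ 3 + 1) / 2%:R.
    by apply: (cvgr_to_le (@cvgXn R _ _ 2 hV)); apply: nearW; exact: h.
  rewrite ler_pdivlMr ?ltr0n // in hh; move: (L ^+ 2) (L ^+ 3) hh => a b hh; lra.
have -> : (5 / 27 : R) = Ls.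
  rewrite LE in Ls1 Ls2; apply/eqP; rewrite eq_le; apply/andP; split; lra.
exact: hS.
Qed.

Theorem mainTheorem4 :
  (let g : fps rat := @gcoef rat in
   let P (p : {poly rat}) (k : nat) : fps rat := fps_mul (fps_of_poly p) (fps_pow g k) in
   forall n : nat,
     fps_add (P ('X * ('X^2 + 11%:R *: 'X - 1)) 0%N)
      (fps_add (P (4%:R *: 'X^3 + 25%:R *: 'X^2 - 14%:R *: 'X + 1) 1%N)
       (fps_add (P ('X * (6%:R *: 'X^2 + 17%:R *: 'X + 3%:R)) 2%N)
        (fps_add (P ('X^2 * (4%:R *: 'X + 3%:R)) 3%N)
                 (P ('X^3) 4%N)))) n = 0)
  /\
  (forall R : realType,
     ([series @gcoef R k * (27 / 256 : R) ^+ k]_k @ \oo --> (5 / 27 : R))).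
Proof.
split; first exact: part1.
exact: part2.
Qed.
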